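(* Fix parameters $m_1,m_2,\alpha>0$. For every $(N_1^a,N_1^A,N_2^a,N_2^A)\in(0,\infty)^4$, all eigenvalues of the matrix $J_{S_L}$ have strictly negative real part.
   Context: For $(N_1^a,N_1^A,N_2^a,N_2^A)\in(0,\infty)^4$ set $p_i=\frac{N_i^A}{N_i^A+N_i^a}$, $q_i=1-p_i=\frac{N_i^a}{N_i^A+N_i^a}$ for $i=1,2$, and $R^A=\frac{\alpha m_2N_2^A}{N_1^A}$, $S^A=\frac{m_1N_1^A}{\alpha N_2^A}$, $R^a=\frac{\alpha m_2N_2^a}{N_1^a}$, $S^a=\frac{m_1N_1^a}{\alpha N_2^a}$. The $3\times3$ matrix $J_{S_L}$ is $$J_{S_L}=\begin{pmatrix}-\frac12 & \frac12(R^A-S^A) & -\frac12(R^a-S^a)\\[2pt] \frac{q_1-q_2}{2} & -(R^A+S^A)-\frac{q_1+q_2}{4} & \frac{q_1+q_2}{4}\\[2pt] \frac{p_2-p_1}{2} & \frac{p_1+p_2}{4} & -(R^a+S^a)-\frac{p_1+p_2}{4}\end{pmatrix}.$$ *)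

(* Defs.v *)
From HB Require Import structures.
From mathcomp Require Import all_boot all_order all_algebra.
From mathcomp Require Import complex.
Set Implicit Arguments. Unset Strict Implicit. Unset Printing Implicit Defensive.
Import Order.TTheory GRing.Theory Num.Theory.
Local Open Scope ring_scope.

Definition pfreq {R : rcfType} (Na NA : R) : R := NA / (NA + Na).
Definition qfreq {R : rcfType} (Na NA : R) : R := Na / (NA + Na).

Definition J_SL {R : rcfType} (m1 m2 alpha N1a N1A N2a N2A : R) : 'M[R]_3 :=
  let p1 := pfreq N1a N1A in let p2 := pfreq N2a N2A in
  let q1 := qfreq N1a N1A in let q2 := qfreq N2a N2A in
  let RA := alpha * m2 * N2A / N1A in
  let SA := m1 * N1A / (alpha * N2A) in
  let Ra := alpha * m2 * N2a / N1a in
  let Sa := m1 * N1a / (alpha * N2a) in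
  let rows : seq (seq R) :=
    [:: [:: - (1/2); (1/2) * (RA - SA); - (1/2) * (Ra - Sa)];
        [:: (q1 - q2) / 2; - (RA + SA) - (q1 + q2) / 4; (q1 + q2) / 4];
        [:: (p2 - p1) / 2; (p1 + p2) / 4; - (Ra + Sa) - (p1 + p2) / 4]] in
  \matrix_(i < 3, j < 3) nth 0 (nth [::] rows i) j.

(* Main.v *)
Require Import Defs.
From HB Require Import structures.
From mathcomp Require Import all_boot all_order all_algebra.
From mathcomp Require Import complex.
Import Order.TTheory GRing.Theory Num.Theory.
Local Open Scope ring_scope.
From mathcomp Require Import ring lra.

Lemma det3f (F : comNzRingType) (f : nat -> nat -> F) :
  \det (\matrix_(i < 3, j < 3) f i j) =
           f 0%N 0%N * (f 1 1 * f 2 2 - f 1 2 * f 2 1)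
         - f 0 1 * (f 1 0 * f 2 2 - f 1 2 * f 2 0)
         + f 0 2 * (f 1 0 * f 2 1 - f 1 1 * f 2 0).
Proof.
rewrite (expand_det_row _ ord0) !big_ord_recl big_ord0 /cofactor.
rewrite !(expand_det_row _ ord0) !big_ord_recl !big_ord0 /cofactor.
rewrite !det_mx11 !mxE /=.
rewrite /bump /= !expr0 !expr1 (_ : (-1) ^+ 2 = 1 :> F); last by rewrite expr2 mulrNN mulr1.
ring.
Qed.
Definition cc2 {R : rcfType} (e : nat -> nat -> R) := - (e 0%N 0%N + e 1 1 + e 2 2).
Definition cc1 {R : rcfType} (e : nat -> nat -> R) :=
  e 0%N 0%N * e 1 1 - e 0 1 * e 1 0 + e 0 0 * e 2 2 - e 0 2 * e 2 0
  + e 1 1 * e 2 2 - e 1 2 * e 2 1.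
Definition cc0 {R : rcfType} (e : nat -> nat -> R) :=
  - (e 0%N 0%N * (e 1 1 * e 2 2 - e 1 2 * e 2 1)
         - e 0 1 * (e 1 0 * e 2 2 - e 1 2 * e 2 0)
         + e 0 2 * (e 1 0 * e 2 1 - e 1 1 * e 2 0)).

Lemma charpoly3 (R : rcfType) (e : nat -> nat -> R) (z : R[i]) :
  \det (\matrix_(i < 3, j < 3) ((e i j)%:C%C - z *+ (i == j)%N)) =
  - (z * z * z + (cc2 e)%:C%C * (z * z) + (cc1 e)%:C%C * z + (cc0 e)%:C%C).
Proof.
rewrite (@det3f _ (fun i j => (e i j)%:C%C - z *+ (i == j))) /= /cc2 /cc1 /cc0 !mulr1n !mulr0n !subr0.
rewrite !(rmorphN, rmorphD, rmorphB, rmorphM) /=.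
ring.
Qed.
Lemma RH (R : rcfType) (c2 c1 c0 : R) (z : R[i]) :
  0 <= c2 -> 0 <= c1 -> 0 < c0 -> c0 < c2 * c1 ->
  z * z * z + c2%:C%C * (z * z) + c1%:C%C * z + c0%:C%C = 0 -> complex.Re z < 0.
Proof.
move=> h2 h1 h0 h21; case: z => x y /= E.
have ER := congr1 (@complex.Re R) E.
have EI := congr1 (@complex.Im R) E.
simpl in ER, EI.
rewrite ltNge; apply/negP => hx.
have [y0|yn] := eqVneq y 0.
  subst y.
  have : 0 < x * x * x + c2 * (x * x) + c1 * x + c0.
    have := mulr_ge0 hx hx; have := mulr_ge0 (mulr_ge0 hx hx) hx.
    have := mulr_ge0 h2 (mulr_ge0 hx hx); have := mulr_ge0 h1 hx. lra.
  have -> : x * x * x + c2 * (x * x) + c1 * x + c0 = 0 by rewrite -[RHS]ER; ring.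
  by rewrite ltxx.
have K : y * y = 3 * (x * x) + 2 * c2 * x + c1.
  have : y * (3 * (x * x) + 2 * c2 * x + c1 - y * y) = 0.
    rewrite -[RHS]EI; ring.
  move/eqP; rewrite mulf_eq0 (negbTE yn) /= subr_eq0 => /eqP <-; done.
have : - (x * x * x * 8 + 8 * c2 * (x * x) + 2 * c1 * x + 2 * (c2 * c2) * x + c2 * c1 - c0) = 0.
  rewrite -[RHS]ER.
  have -> : (x * x - y * y) * x - (x * y + y * x) * y +
    (c2 * (x * x - y * y) - 0 * (x * y + y * x)) + (c1 * x - 0 * y) + c0
    = x * x * x - 3 * x * (y * y) + c2 * (x * x) - c2 * (y * y) + c1 * x + c0 by ring.
  rewrite K; ring.
have := mulr_ge0 hx hx; have := mulr_ge0 (mulr_ge0 hx hx) hx.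
have := mulr_ge0 h2 (mulr_ge0 hx hx); have := mulr_ge0 h1 hx.
have := mulr_ge0 (mulr_ge0 h2 h2) hx. lra.
Qed.
Definition eJ {R : rcfType} (RA SA Ra Sa p1 p2 q1 q2 : R) (i j : nat) : R :=
  let rows : seq (seq R) :=
    [:: [:: - (1/2); (1/2) * (RA - SA); - (1/2) * (Ra - Sa)];
        [:: (q1 - q2) / 2; - (RA + SA) - (q1 + q2) / 4; (q1 + q2) / 4];
        [:: (p2 - p1) / 2; (p1 + p2) / 4; - (Ra + Sa) - (p1 + p2) / 4]] in
  nth 0 (nth [::] rows i) j.

Lemma key (R : rcfType) (RA SA Ra Sa p1 p2 q1 q2 : R) :
  0 < RA -> 0 < SA -> 0 < Ra -> 0 < Sa -> 0 < p1 -> 0 < p2 -> 0 < q1 -> 0 < q2 ->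
  p1 + q1 = 1 -> p2 + q2 = 1 ->
  let e := eJ RA SA Ra Sa p1 p2 q1 q2 in
  [/\ 0 <= cc2 e, 0 <= cc1 e, 0 < cc0 e & cc0 e < cc2 e * cc1 e].
Proof.
move=> hRA hSA hRa hSa hp1 hp2 hq1 hq2 e1 e2 e.
have E1 : p1 = 1 - q1 by lra.
have E2 : p2 = 1 - q2 by lra.
have hC2 : cc2 e = 1 + (RA + SA + Ra + Sa).
  rewrite /e /cc2 /eJ /= E1 E2; lra.
have hC1 : 0 < cc1 e.
  rewrite /e /cc1 /eJ /=.
  have := mulr_gt0 hRA hp1.
  have := mulr_gt0 hRA hp2.
  have := mulr_gt0 hRA hq1.
  have := mulr_gt0 hRA hq2.
  have := mulr_gt0 hSA hp1.
  have := mulr_gt0 hSA hp2.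
  have := mulr_gt0 hSA hq1.
  have := mulr_gt0 hSA hq2.
  have := mulr_gt0 hRa hp1.
  have := mulr_gt0 hRa hp2.
  have := mulr_gt0 hRa hq1.
  have := mulr_gt0 hRa hq2.
  have := mulr_gt0 hSa hp1.
  have := mulr_gt0 hSa hp2.
  have := mulr_gt0 hSa hq1.
  have := mulr_gt0 hSa hq2.
  have := mulr_gt0 hRA hRa.
  have := mulr_gt0 hRA hSa.
  have := mulr_gt0 hSA hRa.
  have := mulr_gt0 hSA hSa.
  have := mulr_gt0 (mulr_gt0 hRA hRa) hp1.
  have := mulr_gt0 (mulr_gt0 hRA hRa) hp2.
  have := mulr_gt0 (mulr_gt0 hRA hRa) hq1.
  have := mulr_gt0 (mulr_gt0 hRA hRa) hq2.
  have := mulr_gt0 (mulr_gt0 hRA hSa) hp1.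
  have := mulr_gt0 (mulr_gt0 hRA hSa) hp2.
  have := mulr_gt0 (mulr_gt0 hRA hSa) hq1.
  have := mulr_gt0 (mulr_gt0 hRA hSa) hq2.
  have := mulr_gt0 (mulr_gt0 hSA hRa) hp1.
  have := mulr_gt0 (mulr_gt0 hSA hRa) hp2.
  have := mulr_gt0 (mulr_gt0 hSA hRa) hq1.
  have := mulr_gt0 (mulr_gt0 hSA hRa) hq2.
  have := mulr_gt0 (mulr_gt0 hSA hSa) hp1.
  have := mulr_gt0 (mulr_gt0 hSA hSa) hp2.
  have := mulr_gt0 (mulr_gt0 hSA hSa) hq1.
  have := mulr_gt0 (mulr_gt0 hSA hSa) hq2.
  have := mulr_gt0 hp1 hp1.
  have := mulr_gt0 hp1 hp2.
  have := mulr_gt0 hp1 hq1.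
  have := mulr_gt0 hp1 hq2.
  have := mulr_gt0 hp2 hp2.
  have := mulr_gt0 hp2 hq1.
  have := mulr_gt0 hp2 hq2.
  have := mulr_gt0 hq1 hq1.
  have := mulr_gt0 hq1 hq2.
  have := mulr_gt0 hq2 hq2.
  have := mulr_gt0 (mulr_gt0 hRA hp1) hp1.
  have := mulr_gt0 (mulr_gt0 hRA hp1) hp2.
  have := mulr_gt0 (mulr_gt0 hRA hp1) hq1.
  have := mulr_gt0 (mulr_gt0 hRA hp1) hq2.
  have := mulr_gt0 (mulr_gt0 hRA hp2) hp2.
  have := mulr_gt0 (mulr_gt0 hRA hp2) hq1.
  have := mulr_gt0 (mulr_gt0 hRA hp2) hq2.
  have := mulr_gt0 (mulr_gt0 hRA hq1) hq1.
  have := mulr_gt0 (mulr_gt0 hRA hq1) hq2.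
  have := mulr_gt0 (mulr_gt0 hRA hq2) hq2.
  have := mulr_gt0 (mulr_gt0 hSA hp1) hp1.
  have := mulr_gt0 (mulr_gt0 hSA hp1) hp2.
  have := mulr_gt0 (mulr_gt0 hSA hp1) hq1.
  have := mulr_gt0 (mulr_gt0 hSA hp1) hq2.
  have := mulr_gt0 (mulr_gt0 hSA hp2) hp2.
  have := mulr_gt0 (mulr_gt0 hSA hp2) hq1.
  have := mulr_gt0 (mulr_gt0 hSA hp2) hq2.
  have := mulr_gt0 (mulr_gt0 hSA hq1) hq1.
  have := mulr_gt0 (mulr_gt0 hSA hq1) hq2.
  have := mulr_gt0 (mulr_gt0 hSA hq2) hq2.
  have := mulr_gt0 (mulr_gt0 hRa hp1) hp1.
  have := mulr_gt0 (mulr_gt0 hRa hp1) hp2.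
  have := mulr_gt0 (mulr_gt0 hRa hp1) hq1.
  have := mulr_gt0 (mulr_gt0 hRa hp1) hq2.
  have := mulr_gt0 (mulr_gt0 hRa hp2) hp2.
  have := mulr_gt0 (mulr_gt0 hRa hp2) hq1.
  have := mulr_gt0 (mulr_gt0 hRa hp2) hq2.
  have := mulr_gt0 (mulr_gt0 hRa hq1) hq1.
  have := mulr_gt0 (mulr_gt0 hRa hq1) hq2.
  have := mulr_gt0 (mulr_gt0 hRa hq2) hq2.
  have := mulr_gt0 (mulr_gt0 hSa hp1) hp1.
  have := mulr_gt0 (mulr_gt0 hSa hp1) hp2.
  have := mulr_gt0 (mulr_gt0 hSa hp1) hq1.
  have := mulr_gt0 (mulr_gt0 hSa hp1) hq2.
  have := mulr_gt0 (mulr_gt0 hSa hp2) hp2.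
  have := mulr_gt0 (mulr_gt0 hSa hp2) hq1.
  have := mulr_gt0 (mulr_gt0 hSa hp2) hq2.
  have := mulr_gt0 (mulr_gt0 hSa hq1) hq1.
  have := mulr_gt0 (mulr_gt0 hSa hq1) hq2.
  have := mulr_gt0 (mulr_gt0 hSa hq2) hq2.
  rewrite E1 E2 in hp1 hp2 *. nra.
have hC0 : 0 < cc0 e.
  rewrite /e /cc0 /eJ /=.
  have := mulr_gt0 hRA hp1.
  have := mulr_gt0 hRA hp2.
  have := mulr_gt0 hRA hq1.
  have := mulr_gt0 hRA hq2.
  have := mulr_gt0 hSA hp1.
  have := mulr_gt0 hSA hp2.
  have := mulr_gt0 hSA hq1.
  have := mulr_gt0 hSA hq2.
  have := mulr_gt0 hRa hp1.
  have := mulr_gt0 hRa hp2.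
  have := mulr_gt0 hRa hq1.
  have := mulr_gt0 hRa hq2.
  have := mulr_gt0 hSa hp1.
  have := mulr_gt0 hSa hp2.
  have := mulr_gt0 hSa hq1.
  have := mulr_gt0 hSa hq2.
  have := mulr_gt0 hRA hRa.
  have := mulr_gt0 hRA hSa.
  have := mulr_gt0 hSA hRa.
  have := mulr_gt0 hSA hSa.
  have := mulr_gt0 (mulr_gt0 hRA hRa) hp1.
  have := mulr_gt0 (mulr_gt0 hRA hRa) hp2.
  have := mulr_gt0 (mulr_gt0 hRA hRa) hq1.
  have := mulr_gt0 (mulr_gt0 hRA hRa) hq2.
  have := mulr_gt0 (mulr_gt0 hRA hSa) hp1.
  have := mulr_gt0 (mulr_gt0 hRA hSa) hp2.
  have := mulr_gt0 (mulr_gt0 hRA hSa) hq1.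
  have := mulr_gt0 (mulr_gt0 hRA hSa) hq2.
  have := mulr_gt0 (mulr_gt0 hSA hRa) hp1.
  have := mulr_gt0 (mulr_gt0 hSA hRa) hp2.
  have := mulr_gt0 (mulr_gt0 hSA hRa) hq1.
  have := mulr_gt0 (mulr_gt0 hSA hRa) hq2.
  have := mulr_gt0 (mulr_gt0 hSA hSa) hp1.
  have := mulr_gt0 (mulr_gt0 hSA hSa) hp2.
  have := mulr_gt0 (mulr_gt0 hSA hSa) hq1.
  have := mulr_gt0 (mulr_gt0 hSA hSa) hq2.
  have := mulr_gt0 hp1 hp1.
  have := mulr_gt0 hp1 hp2.
  have := mulr_gt0 hp1 hq1.
  have := mulr_gt0 hp1 hq2.
  have := mulr_gt0 hp2 hp2.
  have := mulr_gt0 hp2 hq1.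
  have := mulr_gt0 hp2 hq2.
  have := mulr_gt0 hq1 hq1.
  have := mulr_gt0 hq1 hq2.
  have := mulr_gt0 hq2 hq2.
  have := mulr_gt0 (mulr_gt0 hRA hp1) hp1.
  have := mulr_gt0 (mulr_gt0 hRA hp1) hp2.
  have := mulr_gt0 (mulr_gt0 hRA hp1) hq1.
  have := mulr_gt0 (mulr_gt0 hRA hp1) hq2.
  have := mulr_gt0 (mulr_gt0 hRA hp2) hp2.
  have := mulr_gt0 (mulr_gt0 hRA hp2) hq1.
  have := mulr_gt0 (mulr_gt0 hRA hp2) hq2.
  have := mulr_gt0 (mulr_gt0 hRA hq1) hq1.
  have := mulr_gt0 (mulr_gt0 hRA hq1) hq2.
  have := mulr_gt0 (mulr_gt0 hRA hq2) hq2.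
  have := mulr_gt0 (mulr_gt0 hSA hp1) hp1.
  have := mulr_gt0 (mulr_gt0 hSA hp1) hp2.
  have := mulr_gt0 (mulr_gt0 hSA hp1) hq1.
  have := mulr_gt0 (mulr_gt0 hSA hp1) hq2.
  have := mulr_gt0 (mulr_gt0 hSA hp2) hp2.
  have := mulr_gt0 (mulr_gt0 hSA hp2) hq1.
  have := mulr_gt0 (mulr_gt0 hSA hp2) hq2.
  have := mulr_gt0 (mulr_gt0 hSA hq1) hq1.
  have := mulr_gt0 (mulr_gt0 hSA hq1) hq2.
  have := mulr_gt0 (mulr_gt0 hSA hq2) hq2.
  have := mulr_gt0 (mulr_gt0 hRa hp1) hp1.
  have := mulr_gt0 (mulr_gt0 hRa hp1) hp2.
  have := mulr_gt0 (mulr_gt0 hRa hp1) hq1.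
  have := mulr_gt0 (mulr_gt0 hRa hp1) hq2.
  have := mulr_gt0 (mulr_gt0 hRa hp2) hp2.
  have := mulr_gt0 (mulr_gt0 hRa hp2) hq1.
  have := mulr_gt0 (mulr_gt0 hRa hp2) hq2.
  have := mulr_gt0 (mulr_gt0 hRa hq1) hq1.
  have := mulr_gt0 (mulr_gt0 hRa hq1) hq2.
  have := mulr_gt0 (mulr_gt0 hRa hq2) hq2.
  have := mulr_gt0 (mulr_gt0 hSa hp1) hp1.
  have := mulr_gt0 (mulr_gt0 hSa hp1) hp2.
  have := mulr_gt0 (mulr_gt0 hSa hp1) hq1.
  have := mulr_gt0 (mulr_gt0 hSa hp1) hq2.
  have := mulr_gt0 (mulr_gt0 hSa hp2) hp2.
  have := mulr_gt0 (mulr_gt0 hSa hp2) hq1.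
  have := mulr_gt0 (mulr_gt0 hSa hp2) hq2.
  have := mulr_gt0 (mulr_gt0 hSa hq1) hq1.
  have := mulr_gt0 (mulr_gt0 hSa hq1) hq2.
  have := mulr_gt0 (mulr_gt0 hSa hq2) hq2.
  rewrite E1 E2 in hp1 hp2 *. lra.
have h10 : cc0 e < cc1 e.
  rewrite /e /cc0 /cc1 /eJ /=.
  have := mulr_gt0 hRA hp1.
  have := mulr_gt0 hRA hp2.
  have := mulr_gt0 hRA hq1.
  have := mulr_gt0 hRA hq2.
  have := mulr_gt0 hSA hp1.
  have := mulr_gt0 hSA hp2.
  have := mulr_gt0 hSA hq1.
  have := mulr_gt0 hSA hq2.
  have := mulr_gt0 hRa hp1.
  have := mulr_gt0 hRa hp2.
  have := mulr_gt0 hRa hq1.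
  have := mulr_gt0 hRa hq2.
  have := mulr_gt0 hSa hp1.
  have := mulr_gt0 hSa hp2.
  have := mulr_gt0 hSa hq1.
  have := mulr_gt0 hSa hq2.
  have := mulr_gt0 hRA hRa.
  have := mulr_gt0 hRA hSa.
  have := mulr_gt0 hSA hRa.
  have := mulr_gt0 hSA hSa.
  have := mulr_gt0 (mulr_gt0 hRA hRa) hp1.
  have := mulr_gt0 (mulr_gt0 hRA hRa) hp2.
  have := mulr_gt0 (mulr_gt0 hRA hRa) hq1.
  have := mulr_gt0 (mulr_gt0 hRA hRa) hq2.
  have := mulr_gt0 (mulr_gt0 hRA hSa) hp1.
  have := mulr_gt0 (mulr_gt0 hRA hSa) hp2.
  have := mulr_gt0 (mulr_gt0 hRA hSa) hq1.
  have := mulr_gt0 (mulr_gt0 hRA hSa) hq2.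
  have := mulr_gt0 (mulr_gt0 hSA hRa) hp1.
  have := mulr_gt0 (mulr_gt0 hSA hRa) hp2.
  have := mulr_gt0 (mulr_gt0 hSA hRa) hq1.
  have := mulr_gt0 (mulr_gt0 hSA hRa) hq2.
  have := mulr_gt0 (mulr_gt0 hSA hSa) hp1.
  have := mulr_gt0 (mulr_gt0 hSA hSa) hp2.
  have := mulr_gt0 (mulr_gt0 hSA hSa) hq1.
  have := mulr_gt0 (mulr_gt0 hSA hSa) hq2.
  have := mulr_gt0 hp1 hp1.
  have := mulr_gt0 hp1 hp2.
  have := mulr_gt0 hp1 hq1.
  have := mulr_gt0 hp1 hq2.
  have := mulr_gt0 hp2 hp2.
  have := mulr_gt0 hp2 hq1.
  have := mulr_gt0 hp2 hq2.
  have := mulr_gt0 hq1 hq1.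
  have := mulr_gt0 hq1 hq2.
  have := mulr_gt0 hq2 hq2.
  have := mulr_gt0 (mulr_gt0 hRA hp1) hp1.
  have := mulr_gt0 (mulr_gt0 hRA hp1) hp2.
  have := mulr_gt0 (mulr_gt0 hRA hp1) hq1.
  have := mulr_gt0 (mulr_gt0 hRA hp1) hq2.
  have := mulr_gt0 (mulr_gt0 hRA hp2) hp2.
  have := mulr_gt0 (mulr_gt0 hRA hp2) hq1.
  have := mulr_gt0 (mulr_gt0 hRA hp2) hq2.
  have := mulr_gt0 (mulr_gt0 hRA hq1) hq1.
  have := mulr_gt0 (mulr_gt0 hRA hq1) hq2.
  have := mulr_gt0 (mulr_gt0 hRA hq2) hq2.
  have := mulr_gt0 (mulr_gt0 hSA hp1) hp1.
  have := mulr_gt0 (mulr_gt0 hSA hp1) hp2.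
  have := mulr_gt0 (mulr_gt0 hSA hp1) hq1.
  have := mulr_gt0 (mulr_gt0 hSA hp1) hq2.
  have := mulr_gt0 (mulr_gt0 hSA hp2) hp2.
  have := mulr_gt0 (mulr_gt0 hSA hp2) hq1.
  have := mulr_gt0 (mulr_gt0 hSA hp2) hq2.
  have := mulr_gt0 (mulr_gt0 hSA hq1) hq1.
  have := mulr_gt0 (mulr_gt0 hSA hq1) hq2.
  have := mulr_gt0 (mulr_gt0 hSA hq2) hq2.
  have := mulr_gt0 (mulr_gt0 hRa hp1) hp1.
  have := mulr_gt0 (mulr_gt0 hRa hp1) hp2.
  have := mulr_gt0 (mulr_gt0 hRa hp1) hq1.
  have := mulr_gt0 (mulr_gt0 hRa hp1) hq2.
  have := mulr_gt0 (mulr_gt0 hRa hp2) hp2.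
  have := mulr_gt0 (mulr_gt0 hRa hp2) hq1.
  have := mulr_gt0 (mulr_gt0 hRa hp2) hq2.
  have := mulr_gt0 (mulr_gt0 hRa hq1) hq1.
  have := mulr_gt0 (mulr_gt0 hRa hq1) hq2.
  have := mulr_gt0 (mulr_gt0 hRa hq2) hq2.
  have := mulr_gt0 (mulr_gt0 hSa hp1) hp1.
  have := mulr_gt0 (mulr_gt0 hSa hp1) hp2.
  have := mulr_gt0 (mulr_gt0 hSa hp1) hq1.
  have := mulr_gt0 (mulr_gt0 hSa hp1) hq2.
  have := mulr_gt0 (mulr_gt0 hSa hp2) hp2.
  have := mulr_gt0 (mulr_gt0 hSa hp2) hq1.
  have := mulr_gt0 (mulr_gt0 hSa hp2) hq2.
  have := mulr_gt0 (mulr_gt0 hSa hq1) hq1.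
  have := mulr_gt0 (mulr_gt0 hSa hq1) hq2.
  have := mulr_gt0 (mulr_gt0 hSa hq2) hq2.
  rewrite E1 E2 in hp1 hp2 *. lra.
split; [by rewrite hC2; lra | exact: ltW | exact: hC0 |].
rewrite hC2 mulrDl mul1r.
have hab : 0 <= RA + SA + Ra + Sa by lra.
have := mulr_ge0 hab (ltW hC1). lra.
Qed.

Theorem mainTheorem6 (R : rcfType) (m1 m2 alpha : R)
  (hm1 : 0 < m1) (hm2 : 0 < m2) (halpha : 0 < alpha)
  (N1a N1A N2a N2A : R)
  (h1a : 0 < N1a) (h1A : 0 < N1A) (h2a : 0 < N2a) (h2A : 0 < N2A) :
  forall z : R[i],
    eigenvalue (map_mx (fun x : R => (x%:C)%C) (J_SL m1 m2 alpha N1a N1A N2a N2A)) z ->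
    complex.Re z < 0.
Proof.
move=> z /eigenvalueP [v Hv vn0].
set A := map_mx _ _ in Hv.
have Hdet : \det (A - z%:M) = 0.
  apply/eqP; apply: contraR vn0 => hd.
  have U : A - z%:M \in unitmx by rewrite unitmxE unitfE.
  have H : v *m (A - z%:M) = 0 by rewrite mulmxBr Hv mul_mx_scalar subrr.
  by apply/eqP; rewrite -[v]mulmx1 -(mulmxV U) mulmxA H mul0mx.
pose RA := alpha * m2 * N2A / N1A.
pose SA := m1 * N1A / (alpha * N2A).
pose Ra := alpha * m2 * N2a / N1a.
pose Sa := m1 * N1a / (alpha * N2a).
pose p1 := pfreq N1a N1A. pose p2 := pfreq N2a N2A.
pose q1 := qfreq N1a N1A. pose q2 := qfreq N2a N2A.
have EM : A - z%:M = \matrix_(i < 3, j < 3)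
   ((eJ RA SA Ra Sa p1 p2 q1 q2 i j)%:C%C - z *+ (nat_of_ord i == nat_of_ord j)).
  by apply/matrixP => i j; rewrite /A /J_SL !mxE.
rewrite EM charpoly3 in Hdet.
move/eqP: Hdet; rewrite oppr_eq0 => /eqP Hp.
have hRA : 0 < RA := divr_gt0 (mulr_gt0 (mulr_gt0 halpha hm2) h2A) h1A.
have hSA : 0 < SA := divr_gt0 (mulr_gt0 hm1 h1A) (mulr_gt0 halpha h2A).
have hRa : 0 < Ra := divr_gt0 (mulr_gt0 (mulr_gt0 halpha hm2) h2a) h1a.
have hSa : 0 < Sa := divr_gt0 (mulr_gt0 hm1 h1a) (mulr_gt0 halpha h2a).
have hp1 : 0 < p1 by rewrite /p1 /pfreq divr_gt0 // addr_gt0.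
have hp2 : 0 < p2 by rewrite /p2 /pfreq divr_gt0 // addr_gt0.
have hq1 : 0 < q1 by rewrite /q1 /qfreq divr_gt0 // addr_gt0.
have hq2 : 0 < q2 by rewrite /q2 /qfreq divr_gt0 // addr_gt0.
have e1 : p1 + q1 = 1.
  by rewrite /p1 /q1 /pfreq /qfreq -mulrDl divff // lt0r_neq0 // addr_gt0.
have e2 : p2 + q2 = 1.
  by rewrite /p2 /q2 /pfreq /qfreq -mulrDl divff // lt0r_neq0 // addr_gt0.
have [k2 k1 k0 k21] := @key R _ _ _ _ _ _ _ _ hRA hSA hRa hSa hp1 hp2 hq1 hq2 e1 e2.
exact: (@RH R _ _ _ z k2) k1 k0 k21 Hp.
Qed.
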